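(* Let $\sigma: \Omega \to \Delta(A)$ be a canonical experiment. Then $\tau^{*} \in BR(\sigma)$ if and only if there exists $p \in P_r^{*}(\sigma)$ such that for all $a, b \in A$, $$\sum_{\omega \in \Omega} p(\omega)\sigma(a\mid\omega)\,[u_r(b,\omega) - u_r(a,\omega)] \le 0.$$
   Context: Setting: $\Omega$ is a finite set of states, $A$ a finite set of receiver actions, $u_r: A \times \Omega \to \mathbb{R}$ the receiver's payoff. $P \subseteq \Delta(\Omega)$ is a nonempty closed convex set of priors; the receiver has maxmin expected utility preferences. A canonical experiment is $\sigma: \Omega \to \Delta(A)$; a receiver strategy is $\tau: A \to \Delta(A)$. $u_r(p,\sigma,\tau) = \sum_{\omega,m,a} p(\omega)\sigma(m\mid\omega)\tau(a\mid m)u_r(a,\omega)$, $u_r(\sigma,\tau) = \min_{p \in P} u_r(p,\sigma,\tau)$, and $BR(\sigma) = \arg\max_{\tau} u_r(\sigma,\tau)$ over all $\tau: A \to \Delta(A)$. The obedient strategy $\tau^{*}$ is $\tau^{*}(a\mid a) = 1$ for all $a$. $P_r^{*}(\sigma) = \arg\min_{p \in P} u_r(p,\sigma,\tau^{*})$ is the set of worst-case priors under obedience. *)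

(* Defs.v *)
From mathcomp Require Import all_boot all_order all_algebra.
From mathcomp Require Import boolp classical_sets reals.
Set Implicit Arguments. Unset Strict Implicit. Unset Printing Implicit Defensive.
Import Order.TTheory GRing.Theory Num.Theory.
Local Open Scope ring_scope.
Local Open Scope classical_set_scope.

Section Defs.
Variable R : realType.

Definition is_dist (X : finType) (q : X -> R) : Prop :=
  (forall x, 0 <= q x) /\ \sum_(x : X) q x = 1.

(* a (canonical) experiment sigma : Omega -> Delta(A), sigma w m = sigma(m | w) *)
Definition is_experiment (Omega A : finType) (sigma : Omega -> A -> R) : Prop :=
  forall w, is_dist (sigma w).

(* a receiver strategy tau : A -> Delta(A), tau m a = tau(a | m) *)
Definition is_strategy (A : finType) (tau : A -> A -> R) : Prop :=
  forall m, is_dist (tau m).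

Definition obedient (A : finType) : A -> A -> R :=
  fun m a => if m == a then 1 else 0.

Definition ur_p (Omega A : finType) (u : A -> Omega -> R) (p : Omega -> R)
  (sigma : Omega -> A -> R) (tau : A -> A -> R) : R :=
  \sum_(w : Omega) \sum_(m : A) \sum_(a : A) p w * sigma w m * tau m a * u a w.

(* u_r(sigma, tau) = min_{p in P} u_r(p, sigma, tau)
   (the minimum exists since P is compact; it equals the infimum) *)
Definition ur (Omega A : finType) (u : A -> Omega -> R) (P : set (Omega -> R))
  (sigma : Omega -> A -> R) (tau : A -> A -> R) : R :=
  inf [set ur_p u p sigma tau | p in P].

Definition in_BR (Omega A : finType) (u : A -> Omega -> R) (P : set (Omega -> R))
  (sigma : Omega -> A -> R) (tau : A -> A -> R) : Prop :=
  is_strategy tau /\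
  forall tau', is_strategy tau' -> ur u P sigma tau' <= ur u P sigma tau.

Definition Pstar (Omega A : finType) (u : A -> Omega -> R) (P : set (Omega -> R))
  (sigma : Omega -> A -> R) : set (Omega -> R) :=
  [set p | P p /\ forall q, P q ->
     ur_p u p sigma (@obedient A) <= ur_p u q sigma (@obedient A)].

Definition priors_subset (Omega : finType) (P : set (Omega -> R)) : Prop :=
  forall p, P p -> is_dist p.

Definition convex_set (Omega : finType) (P : set (Omega -> R)) : Prop :=
  forall p q (t : R), P p -> P q -> 0 <= t <= 1 ->
    P (fun w => t * p w + (1 - t) * q w).

(* closedness in R^Omega (finite-dimensional, so sequential closedness
   w.r.t. coordinatewise convergence is closedness) *)
Definition closed_set (Omega : finType) (P : set (Omega -> R)) : Prop :=
  forall (s : nat -> Omega -> R) (p : Omega -> R),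
    (forall n, P (s n)) ->
    (forall eps : R, 0 < eps -> exists N : nat, forall n, (N <= n)%N ->
        forall w, `|s n w - p w| < eps) ->
    P p.

End Defs.

(* Main.v *)
Set Warnings "-notation-overridden,-ambiguous-paths,-deprecated".
Require Import Defs.
From mathcomp Require Import all_boot all_order all_algebra.
From mathcomp Require Import boolp classical_sets reals.
From mathcomp Require Import topology normedtype sequences.
From mathcomp Require Import ring lra.
Import Order.TTheory GRing.Theory Num.Theory numFieldNormedType.Exports.
Local Open Scope ring_scope.
Local Open Scope classical_set_scope.
Set Implicit Arguments. Unset Strict Implicit.

Lemma sum_ge_term (R : realType) (I : finType) (F : I -> R) j :
  (forall i, 0 <= F i) -> F j <= \sum_i F i.
Proof. by move=> H; rewrite (bigD1 j) //= lerDl sumr_ge0. Qed.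

Lemma dist_bnd (R : realType) (Omega : finType) (p : Omega -> R) :
  is_dist p -> forall w, 0 <= p w <= 1.
Proof. by move=> [H0 H1] w; rewrite H0 /= -H1; exact: sum_ge_term. Qed.

Definition lin (R : realType) (Omega : finType) (c p : Omega -> R) : R :=
  \sum_w p w * c w.

Lemma lin_norm (R : realType) (Omega : finType) (c p : Omega -> R) :
  is_dist p -> `|lin c p| <= \sum_w `|c w|.
Proof.
move=> /dist_bnd Hp; rewrite /lin; apply: le_trans (ler_norm_sum _ _ _) _.
apply: ler_sum => w _; rewrite normrM; have /andP[h0 h1] := Hp w.
by rewrite (ger0_norm h0) ler_piMl.
Qed.

Lemma lin_lip (R : realType) (Omega : finType) (c p q : Omega -> R) e :
  (forall w, `|p w - q w| < e) -> `|lin c p - lin c q| <= (\sum_w `|c w|) * e.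
Proof.
move=> H; rewrite /lin -sumrB mulr_suml; apply: le_trans (ler_norm_sum _ _ _) _.
apply: ler_sum => w _; rewrite -mulrBl normrM mulrC; apply: ler_wpM2l => //.
exact: ltW.
Qed.

Lemma lin_conv (R : realType) (Omega : finType) (c p q : Omega -> R) t :
  lin c (fun w => t * p w + (1 - t) * q w) = t * lin c p + (1 - t) * lin c q.
Proof. by rewrite /lin !mulr_sumr -big_split; apply: eq_bigr => w _ /=; ring. Qed.

Lemma lim_le (R : realType) (Omega : finType) (f : (Omega -> R) -> R)
  (s : nat -> Omega -> R) (p : Omega -> R) (C K B : R) :
  0 <= C -> 0 <= K ->
  (forall eps, 0 < eps -> exists N, forall n, (N <= n)%N -> forall w, `|s n w - p w| < eps) ->
  (forall n e, 0 < e -> (forall w, `|s n w - p w| < e) -> f p <= f (s n) + C * e) ->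
  (forall n, f (s n) <= B + K / n.+1%:R) ->
  f p <= B.
Proof.
move=> C0 K0 cv lip bd; apply/ler_addgt0Pr => eta eta0.
have C1 : 0 < C + 1 by lra.
have e0 : 0 < eta / (2 * (C + 1)) by apply: divr_gt0 => //; lra.
have [N HN] := cv _ e0.
pose k := Num.Def.trunc (2 * K / eta).
pose n := maxn N k.
have h1 := lip n _ e0 (HN n (leq_maxl _ _)).
have h2 := bd n.
have h3 : K / n.+1%:R <= eta / 2.
  have hk := truncnS_gt (2 * K / eta).
  have hkn : (k.+1 <= n.+1)%N by rewrite ltnS leq_maxr.
  have : (k.+1%:R <= n.+1%:R :> R) by rewrite ler_nat.
  rewrite -/k in hk => hkn'.
  have hh : 2 * K / eta < n.+1%:R by exact: lt_le_trans hk hkn'.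
  rewrite ltr_pdivrMr // in hh.
  rewrite ler_pdivrMr ?ltr0n //; lra.
have h4 : C * (eta / (2 * (C + 1))) <= eta / 2.
  have -> : C * (eta / (2 * (C + 1))) = (eta / 2) * (C / (C + 1)).
    by field; lra.
  rewrite -[X in _ <= X]mulr1; apply: ler_wpM2l; first lra.
  by rewrite ler_pdivrMr //; lra.
move: h1 h2 h3 h4; set x := C * _; set y := K / _; set z := f (s n); lra.
Qed.
Definition cvgE (R : realType) (u : nat -> R) (l : R) :=
  forall eps : R, 0 < eps -> exists N : nat, forall n, (N <= n)%N -> `|u n - l| < eps.

Lemma cvgn_cvgE (R : realType) (u : nat -> R) : cvgn u -> cvgE u (limn u).
Proof.
move=> /cvgrPdist_lt H eps e0.
have [N _ HN] := H eps e0.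
exists N => n Nn; rewrite distrC; exact: HN.
Qed.

Lemma incr_ge (f : nat -> nat) : (forall n, (f n < f n.+1)%N) -> forall n, (n <= f n)%N.
Proof.
move=> H; elim=> [|n IH]//; exact: leq_ltn_trans IH (H n).
Qed.

Lemma bw_list (R : realType) (Omega : finType) (s : nat -> Omega -> R) :
  (forall n w, 0 <= s n w <= 1) -> forall l : seq Omega,
  exists phi : nat -> nat, (forall n, (phi n < phi n.+1)%N) /\
    forall w, w \in l -> exists pw, cvgE (fun n => s (phi n) w) pw.
Proof.
move=> Hb; elim=> [|w l [phi [Hphi Hl]]].
  by exists id; split.
have bnd : bounded_fun (fun n => s (phi n) w).
  exists 1; split=> // M M1 x _.
  have /andP[h0 h1] := Hb (phi x) w.
  rewrite /= ger0_norm //; exact: le_trans h1 (ltW M1).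
have [f finc fc] := bolzano_weierstrass bnd.
have fS : forall n, (f n < f n.+1)%N.
  move=> n; have := finc n.+1 n; rewrite !leEnat ltnn => H; by rewrite ltnNge H.
exists (phi \o f); split.
  move=> n /=; have hp : {homo phi : i j / (i < j)%N}.
    by apply: homo_ltn => // ? ? ?; exact: ltn_trans.
  exact: hp.
move=> w'; rewrite inE => /orP[/eqP ->|/Hl [pw Hpw]].
  exists (limn ((fun n => s (phi n) w) \o f)); exact: cvgn_cvgE.
exists pw => eps e0; have [N HN] := Hpw eps e0.
exists N => n Nn /=; apply: HN.
exact: leq_trans Nn (incr_ge fS n).
Qed.

Lemma bw_fin (R : realType) (Omega : finType) (s : nat -> Omega -> R) :
  (forall n w, 0 <= s n w <= 1) ->
  exists phi : nat -> nat, (forall n, (phi n < phi n.+1)%N) /\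
   exists p : Omega -> R, forall eps, 0 < eps -> exists N, forall n, (N <= n)%N ->
     forall w, `|s (phi n) w - p w| < eps.
Proof.
move=> Hb; have [phi [Hphi Hl]] := bw_list Hb (enum Omega).
have : forall w, exists pw, cvgE (fun n => s (phi n) w) pw.
  by move=> w; apply: Hl; rewrite mem_enum.
case/choice => p Hp; exists phi; split => //; exists p => eps e0.
have : forall w, exists N, forall n, (N <= n)%N -> `|s (phi n) w - p w| < eps.
  by move=> w; exact: Hp.
case/choice => Nf HN; exists (\max_w Nf w)%N => n Hn w; apply: HN.
by apply: leq_trans Hn; exact: leq_bigmax.
Qed.

Lemma min_attain (R : realType) (Omega : finType) (Y : set (Omega -> R))
  (f : (Omega -> R) -> R) (C : R) :
  0 <= C -> Y !=set0 -> (forall p, Y p -> is_dist p) -> closed_set Y ->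
  (forall p q e, is_dist p -> is_dist q -> 0 < e ->
      (forall w, `|p w - q w| < e) -> `|f p - f q| <= C * e) ->
  exists2 p0, Y p0 & forall q, Y q -> f p0 <= f q.
Proof.
move=> C0 [y0 Yy0] Yd Ycl lip.
have lb : forall q, Y q -> f y0 - C * 2 <= f q.
  move=> q Yq; have two : (0:R) < 2 by lra.
  have := lip y0 q 2 (Yd _ Yy0) (Yd _ Yq) two.
  have : forall w, `|y0 w - q w| < 2.
    move=> w; have /andP[a1 a2] := dist_bnd (Yd _ Yy0) w.
    have /andP[b1 b2] := dist_bnd (Yd _ Yq) w.
    rewrite ltr_norml; apply/andP; split; lra.
  move=> /[swap] /[apply] /ler_normlP [h1 h2]; lra.
set m := inf (f @` Y).
have hinf : has_inf (f @` Y).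
  split; first by exists (f y0), y0.
  by exists (f y0 - C * 2) => _ [q Yq <-]; exact: lb.
have : forall n : nat, exists y, Y y /\ f y < m + n.+1%:R^-1.
  move=> n; have en : 0 < n.+1%:R^-1 :> R by rewrite invr_gt0 ltr0n.
  have [_ [y Yy <-] H] := inf_adherent en hinf.
  by exists y.
case/choice => y Hy.
have yb : forall n w, 0 <= y n w <= 1 by move=> n w; exact: dist_bnd (Yd _ (Hy n).1) w.
have [phi [Hphi [p0 Hc]]] := bw_fin yb.
have Yp0 : Y p0 by apply: (Ycl (fun n => y (phi n)) p0) => // n; exact: (Hy _).1.
exists p0 => // q Yq.
apply: (@le_trans _ _ m); last by apply: (ge_inf hinf.2); exists q.
apply: (@lim_le _ _ f (fun n => y (phi n)) p0 C 1 m C0 ler01 Hc).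
  move=> n e e0 H; apply: ler_distlCDr; apply: lip => //.
    exact: Yd (Hy _).1.
  exact: Yd.
move=> n; apply: ltW; apply: lt_le_trans (Hy (phi n)).2 _.
rewrite lerD2l div1r lef_pV2 ?posrE ?ltr0n // ler_nat ltnS.
exact: incr_ge Hphi n.
Qed.

Definition coef (R : realType) (Omega A : finType) (u : A -> Omega -> R)
  (sigma : Omega -> A -> R) (tau : A -> A -> R) (w : Omega) : R :=
  \sum_m \sum_a sigma w m * tau m a * u a w.

Lemma ur_p_lin (R : realType) (Omega A : finType) (u : A -> Omega -> R) p sigma tau :
  ur_p u p sigma tau = lin (coef u sigma tau) p.
Proof.
rewrite /ur_p /lin /coef; apply: eq_bigr => w _; rewrite mulr_sumr.
apply: eq_bigr => m _; rewrite mulr_sumr; apply: eq_bigr => a _; ring.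
Qed.

Definition Dc (R : realType) (Omega A : finType) (u : A -> Omega -> R)
  (sigma : Omega -> A -> R) (m a : A) (w : Omega) : R :=
  sigma w m * (u a w - u m w).

Lemma Dc_diag (R : realType) (Omega A : finType) (u : A -> Omega -> R) sigma m p :
  lin (Dc u sigma m m) p = 0.
Proof. by rewrite /lin big1 // => w _; rewrite /Dc subrr !mulr0. Qed.

Lemma sum_if (R : realType) (A : finType) (m : A) (F : A -> R) :
  \sum_a (if m == a then F a else 0) = F m.
Proof.
rewrite (bigD1 m) //= eqxx big1 ?addr0 // => a.
by rewrite eq_sym => /negbTE ->.
Qed.

Lemma ur_p_ob (R : realType) (Omega A : finType) (u : A -> Omega -> R) p sigma :
  ur_p u p sigma (@obedient R A) = \sum_w \sum_m p w * sigma w m * u m w.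
Proof.
rewrite /ur_p; apply: eq_bigr => w _; apply: eq_bigr => m _.
rewrite (bigD1 m) //= /obedient eqxx mulr1 big1 ?addr0 // => a.
by rewrite eq_sym => /negbTE ->; rewrite mulr0 mul0r.
Qed.

Lemma ur_p_decomp (R : realType) (Omega A : finType) (u : A -> Omega -> R) p sigma
  (tau : A -> A -> R) : (forall m, \sum_a tau m a = 1) ->
  ur_p u p sigma tau = ur_p u p sigma (@obedient R A) +
     \sum_m \sum_a tau m a * lin (Dc u sigma m a) p.
Proof.
move=> Ht; rewrite ur_p_ob.
have -> : \sum_m \sum_a tau m a * lin (Dc u sigma m a) p =
   \sum_w \sum_m \sum_a tau m a * (p w * Dc u sigma m a w).
  rewrite [RHS]exchange_big; apply: eq_bigr => m _ /=.
  rewrite [RHS]exchange_big; apply: eq_bigr => a _ /=.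
  by rewrite /lin mulr_sumr.
rewrite /ur_p -big_split; apply: eq_bigr => w _ /=.
rewrite -big_split; apply: eq_bigr => m _ /=.
rewrite -[X in X + _]mulr1 -(Ht m) mulr_sumr -big_split; apply: eq_bigr => a _ /=.
rewrite /Dc; ring.
Qed.

Lemma ob_strategy (R : realType) (A : finType) : is_strategy (@obedient R A).
Proof.
move=> m; split.
  by move=> a; rewrite /obedient; case: eqP.
rewrite (bigD1 m) //= /obedient eqxx big1 ?addr0 // => a.
by rewrite eq_sym => /negbTE ->.
Qed.

Lemma ur_has_inf (R : realType) (Omega A : finType) (u : A -> Omega -> R)
  (P : set (Omega -> R)) sigma tau :
  P !=set0 -> priors_subset P -> has_inf [set ur_p u p sigma tau | p in P].
Proof.
move=> [p0 Pp0] HPs; split; first by exists (ur_p u p0 sigma tau), p0.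
exists (- \sum_w `|coef u sigma tau w|) => _ [p Pp <-].
rewrite ur_p_lin; have /ler_normlP [h1 h2] := lin_norm (coef u sigma tau) (HPs _ Pp).
lra.
Qed.

Lemma ur_le (R : realType) (Omega A : finType) (u : A -> Omega -> R)
  (P : set (Omega -> R)) sigma tau p :
  P !=set0 -> priors_subset P -> P p -> ur u P sigma tau <= ur_p u p sigma tau.
Proof.
move=> Pn Ps Pp; apply: (ge_inf (ur_has_inf u sigma tau Pn Ps).2); by exists p.
Qed.

Lemma ur_ge (R : realType) (Omega A : finType) (u : A -> Omega -> R)
  (P : set (Omega -> R)) sigma tau x :
  P !=set0 -> (forall p, P p -> x <= ur_p u p sigma tau) -> x <= ur u P sigma tau.
Proof.
move=> [p0 Pp0] H; apply: lb_le_inf; first by exists (ur_p u p0 sigma tau), p0.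
by move=> _ [p Pp <-]; exact: H.
Qed.

Definition pp (R : realType) (x : R) : R := if 0 <= x then x else 0.

Lemma pp_ge0 (R : realType) (x : R) : 0 <= pp x.
Proof. by rewrite /pp; case: ifP. Qed.

Lemma pp_le (R : realType) (x : R) : pp x <= `|x|.
Proof. rewrite /pp; case: ifP => h; [by rewrite ger0_norm|exact: normr_ge0]. Qed.

Lemma pp_mul (R : realType) (x : R) : pp x * x = pp x ^+ 2.
Proof. by rewrite /pp; case: ifP => h; rewrite ?expr2 ?mul0r ?mulr0. Qed.

Lemma pp_lip (R : realType) (x y : R) : `|pp x - pp y| <= `|x - y|.
Proof.
have n1 : x - y <= `|x - y| by exact: ler_norm.
have n2 : - (x - y) <= `|x - y| by rewrite -normrN; exact: ler_norm.
rewrite /pp ler_norml; case: ifP => hx; case: ifP => hy; apply/andP; split;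
  try (move/negbT: hx; rewrite -ltNge => hx);
  try (move/negbT: hy; rewrite -ltNge => hy); lra.
Qed.

Lemma pp_sq_lip (R : realType) (x y M K : R) :
  `|x| <= M -> `|y| <= M -> `|x - y| <= K -> `|pp x ^+ 2 - pp y ^+ 2| <= 2 * M * K.
Proof.
move=> hx hy hxy; rewrite subr_sqr normrM mulrC.
have h1 : `|pp x - pp y| <= K := le_trans (pp_lip x y) hxy.
have h2 : `|pp x + pp y| <= 2 * M.
  rewrite ger0_norm ?addr_ge0 ?pp_ge0 //.
  have := le_trans (pp_le x) hx; have := le_trans (pp_le y) hy; lra.
by apply: ler_pM.
Qed.

Lemma pp_sq_le (R : realType) (y s : R) : pp (y + s) ^+ 2 <= (pp y + s) ^+ 2.
Proof.
rewrite /pp; case: ifP => h1; case: ifP => h2; rewrite ?expr0n /= ?sqr_ge0 //.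
rewrite add0r; have h2' := negbT h2; rewrite -ltNge in h2'.
rewrite !expr2; apply: ler_pM; lra.
Qed.

Lemma small_lemma (R : realType) (a b : R) :
  (forall t, 0 < t <= 1 -> 0 <= 2 * a + t * b) -> 0 <= a.
Proof.
move=> H; rewrite leNgt; apply/negP => a0.
have b1 : 0 < `|b| + 1 - a by have := normr_ge0 b; lra.
have [t ht] : exists t, t = (- a) / (`|b| + 1 - a) by eexists.
have t0 : 0 < t by rewrite ht; apply: divr_gt0 => //; lra.
have t1 : t <= 1 by rewrite ht ler_pdivrMr //; have := normr_ge0 b; lra.
have t2 : t * (`|b| + 1 - a) = - a by rewrite ht divfK //; exact: lt0r_neq0.
have := H t; rewrite t0 t1 => /(_ isT) h.
have h3 : t * b <= t * `|b| by apply: ler_wpM2l; [exact: ltW | exact: ler_norm].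
have h5 : t * `|b| < t * (`|b| + 1 - a) by rewrite ltr_pM2l //; lra.
lra.
Qed.

Lemma lin_sum2 (R : realType) (Omega A : finType) (mu : A -> A -> R)
  (F : A -> A -> Omega -> R) (p : Omega -> R) :
  \sum_m \sum_a mu m a * lin (F m a) p = lin (fun w => \sum_m \sum_a mu m a * F m a w) p.
Proof.
rewrite /lin; under [RHS]eq_bigr do rewrite mulr_sumr.
rewrite [RHS]exchange_big; apply: eq_bigr => m _ /=.
under [RHS]eq_bigr do rewrite mulr_sumr.
rewrite [RHS]exchange_big; apply: eq_bigr => a _ /=.
rewrite mulr_sumr; apply: eq_bigr => w _; ring.
Qed.

Lemma sum_Dc (R : realType) (Omega A : finType) (u : A -> Omega -> R) sigma p a b :
  \sum_(w : Omega) p w * sigma w a * (u b w - u a w) = lin (Dc u sigma a b) p.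
Proof. by rewrite /lin /Dc; apply: eq_bigr => w _; rewrite mulrA. Qed.

Definition hfun (R : realType) (Omega A : finType) (u : A -> Omega -> R)
  (sigma : Omega -> A -> R) (p : Omega -> R) : R :=
  \sum_m \sum_a pp (lin (Dc u sigma m a) p) ^+ 2.

Lemma h_lip (R : realType) (Omega A : finType) (u : A -> Omega -> R) sigma
  (p q : Omega -> R) e : is_dist p -> is_dist q -> (forall w, `|p w - q w| < e) ->
  `|hfun u sigma p - hfun u sigma q| <=
  (\sum_m \sum_a 2 * (\sum_w `|Dc u sigma m a w|) * (\sum_w `|Dc u sigma m a w|)) * e.
Proof.
move=> dp dq H; rewrite /hfun -sumrB; apply: le_trans (ler_norm_sum _ _ _) _.
rewrite mulr_suml; apply: ler_sum => m _; rewrite -sumrB.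
apply: le_trans (ler_norm_sum _ _ _) _.
rewrite mulr_suml; apply: ler_sum => a _; rewrite -mulrA.
apply: pp_sq_lip; [exact: lin_norm | exact: lin_norm | exact: lin_lip].
Qed.

Lemma sum2_ge0 (R : realType) (A : finType) (F : A -> A -> R) :
  (forall m a, 0 <= F m a) -> 0 <= \sum_m \sum_a F m a.
Proof. by move=> H; apply: sumr_ge0 => m _; apply: sumr_ge0 => a _. Qed.

Lemma sum2_ge_term (R : realType) (A : finType) (F : A -> A -> R) m0 a0 :
  (forall m a, 0 <= F m a) -> F m0 a0 <= \sum_m \sum_a F m a.
Proof.
move=> H; apply: (@le_trans _ _ (\sum_a F m0 a)); first exact: sum_ge_term.
exact: (@sum_ge_term R A (fun m => \sum_a F m a) m0 (fun m => sumr_ge0 _ (fun a _ => H m a))).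
Qed.

Lemma sum2_expand (R : realType) (A : finType) (F G H : A -> A -> R) (t : R) :
  \sum_m \sum_a (F m a + t * (2 * G m a + t * H m a)) =
  \sum_m \sum_a F m a + t * (2 * \sum_m \sum_a G m a + t * \sum_m \sum_a H m a).
Proof.
have E1 : \sum_m \sum_a (F m a + t * (2 * G m a + t * H m a)) =
   \sum_m \sum_a F m a + \sum_m \sum_a (t * (2 * G m a + t * H m a)).
  by rewrite -big_split; apply: eq_bigr => m _; rewrite -big_split.
have E2 : \sum_m \sum_a (t * (2 * G m a + t * H m a)) =
   t * \sum_m \sum_a (2 * G m a + t * H m a).
  by rewrite mulr_sumr; apply: eq_bigr => m _; rewrite mulr_sumr.
have E3 : \sum_m \sum_a (2 * G m a + t * H m a) =
   2 * \sum_m \sum_a G m a + t * \sum_m \sum_a H m a.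
  rewrite !mulr_sumr -big_split; apply: eq_bigr => m _.
  by rewrite !mulr_sumr -big_split.
by rewrite E1 E2 E3.
Qed.

Unset Implicit Arguments.

Theorem mainTheorem5 (R : realType) (Omega A : finType)
  (u : A -> Omega -> R) (P : set (Omega -> R))
  (HPne : P !=set0) (HPsub : priors_subset P) (HPcl : closed_set P)
  (HPcv : convex_set P)
  (sigma : Omega -> A -> R) (Hsigma : is_experiment sigma) :
  in_BR u P sigma (@obedient R A) <->
  exists p, Pstar u P sigma p /\
    forall a b : A,
      \sum_(w : Omega) p w * sigma w a * (u b w - u a w) <= 0.
Proof.
split; last first.
  move=> [p [[Pp Hmin] HD]]; split; first exact: ob_strategy.
  move=> tau' Htau'; apply: le_trans (ur_le u sigma tau' HPne HPsub Pp) _.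
  apply: (@le_trans _ _ (ur_p u p sigma (@obedient R A))); last first.
    by apply: ur_ge => // q Pq; exact: Hmin.
  rewrite (ur_p_decomp _ _ _ (fun m => (Htau' m).2)) gerDl.
  apply: sumr_le0 => m _; apply: sumr_le0 => a _.
  apply: mulr_ge0_le0; first exact: (Htau' m).1.
  by rewrite -sum_Dc; exact: HD.
move=> [_ HBR].
set ob := @obedient R A.
set cL := coef u sigma ob.
have Lur : forall p, ur_p u p sigma ob = lin cL p by move=> p; exact: ur_p_lin.
have CL0 : 0 <= \sum_w `|cL w| by apply: sumr_ge0 => w _.
have [p0 Pp0 Hp0] := @min_attain R Omega P (lin cL) (\sum_w `|cL w|) CL0 HPne HPsub HPcl
   (fun p q e _ _ _ H => lin_lip cL H).
set V := lin cL p0.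
have HV : ur u P sigma ob = V.
  apply/le_anti/andP; split.
    by rewrite /V -Lur; exact: ur_le.
  by apply: ur_ge => // q Pq; rewrite Lur; exact: Hp0.
have LgeV : forall q, P q -> V <= lin cL q := Hp0.
pose Q := [set p | P p /\ lin cL p <= V].
have Qne : Q !=set0 by exists p0; split.
have Qsub : forall p, Q p -> is_dist p by move=> p [Pp _]; exact: HPsub.
have Qcl : closed_set Q.
  move=> s p Hs Hc; split; first exact: (HPcl s p (fun n => (Hs n).1) Hc).
  apply: (@lim_le R Omega (lin cL) s p (\sum_w `|cL w|) 0 V CL0 (lexx 0) Hc).
    move=> n e e0 H; apply: ler_distlCDr; exact: lin_lip.
  by move=> n; rewrite mul0r addr0; exact: (Hs n).2.
have Qcv : forall p q t, Q p -> Q q -> 0 <= t <= 1 ->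
    Q (fun w => t * p w + (1 - t) * q w).
  move=> p q t [Pp Lp] [Pq Lq] ht; split; first exact: HPcv.
  rewrite lin_conv; case/andP: ht => t0 t1.
  have h1 := ler_wpM2l t0 Lp.
  have h2 : (1 - t) * lin cL q <= (1 - t) * V by apply: ler_wpM2l => //; lra.
  move: h1 h2; rewrite mulrBl mulrBl !mul1r; lra.
have Pstar_Q : forall q, Q q -> Pstar u P sigma q.
  move=> q [Pq Lq]; split => // r Pr; rewrite !Lur; exact: le_trans Lq (LgeV r Pr).
set Ch := \sum_m \sum_a 2 * (\sum_w `|Dc u sigma m a w|) * (\sum_w `|Dc u sigma m a w|).
have Ch0 : 0 <= Ch.
  apply: sum2_ge0 => m a; apply: mulr_ge0; last exact: sumr_ge0.
  by apply: mulr_ge0 => //; exact: sumr_ge0.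
have [q0 Qq0 Hq0] := @min_attain R Omega Q (hfun u sigma) Ch Ch0 Qne Qsub Qcl
   (fun p q e dp dq _ H => h_lip u sigma dp dq H).
case: (pselect (forall m a, lin (Dc u sigma m a) q0 <= 0)) => [Hall|Hnot].
  exists q0; split; first exact: Pstar_Q.
  by move=> a b; rewrite sum_Dc; exact: Hall.
exfalso.
have [m0 [a0 Hma]] : exists m a, 0 < lin (Dc u sigma m a) q0.
  apply: contra_notP Hnot => H m a; rewrite leNgt; apply/negP => Hp; apply: H.
  by exists m, a.
pose lam m a := pp (lin (Dc u sigma m a) q0).
have lam0 : forall m a, 0 <= lam m a by move=> m a; exact: pp_ge0.
have lampos : 0 < lam m0 a0 by rewrite /lam /pp (ltW Hma).
set S := \sum_m \sum_a lam m a.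
have S0 : 0 < S := lt_le_trans lampos (sum2_ge_term m0 a0 lam0).
have hq0 : hfun u sigma q0 = \sum_m \sum_a lam m a ^+ 2 by [].
have Hq : 0 < hfun u sigma q0.
  rewrite hq0; apply: lt_le_trans (exprn_gt0 2 lampos) _.
  exact: (@sum2_ge_term R A (fun m a => lam m a ^+ 2) m0 a0 (fun m a => sqr_ge0 _)).
have key : forall q, Q q ->
    hfun u sigma q0 <= \sum_m \sum_a lam m a * lin (Dc u sigma m a) q.
  move=> q Qq.
  pose d m a := lin (Dc u sigma m a) q - lin (Dc u sigma m a) q0.
  have HA : 0 <= \sum_m \sum_a lam m a * d m a.
    apply: (@small_lemma R _ (\sum_m \sum_a d m a ^+ 2)) => t /andP [t0 t1].
    have Qt := Qcv q q0 t Qq Qq0 (introT andP (conj (ltW t0) t1)).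
    have h1 := Hq0 _ Qt.
    have h2 : hfun u sigma (fun w => t * q w + (1 - t) * q0 w) <=
        \sum_m \sum_a (lam m a + t * d m a) ^+ 2.
      apply: ler_sum => m _; apply: ler_sum => a _.
      rewrite lin_conv.
      have -> : t * lin (Dc u sigma m a) q + (1 - t) * lin (Dc u sigma m a) q0 =
          lin (Dc u sigma m a) q0 + t * d m a by rewrite /d; ring.
      exact: pp_sq_le.
    have h3 : \sum_m \sum_a (lam m a + t * d m a) ^+ 2 =
        hfun u sigma q0 + t * (2 * \sum_m \sum_a lam m a * d m a +
                               t * \sum_m \sum_a d m a ^+ 2).
      rewrite hq0 -sum2_expand; apply: eq_bigr => m _; apply: eq_bigr => a _; ring.
    have h4 : 0 <= t * (2 * \sum_m \sum_a lam m a * d m a + t * \sum_m \sum_a d m a ^+ 2).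
      move: h1 h2 h3; set X := t * _; set Y := hfun _ _ _; set Z := hfun _ _ _; set W := \sum_m _.
      move=> h1 h2 h3; lra.
    by rewrite pmulr_rge0 in h4.
  have -> : \sum_m \sum_a lam m a * lin (Dc u sigma m a) q =
      hfun u sigma q0 + \sum_m \sum_a lam m a * d m a.
    rewrite hq0 -big_split; apply: eq_bigr => m _; rewrite -big_split.
    apply: eq_bigr => a _ /=; rewrite /d /lam -pp_mul; ring.
  by rewrite lerDl.
pose mu m a := lam m a / S.
have mu0 : forall m a, 0 <= mu m a.
  by move=> m a; apply: divr_ge0 => //; exact: ltW.
have musum : \sum_m \sum_a mu m a = 1.
  rewrite /mu; under eq_bigr do rewrite -mulr_suml.
  by rewrite -mulr_suml divff //; exact: lt0r_neq0.
have rowle : forall m, \sum_a mu m a <= 1.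
  move=> m; rewrite -musum.
  exact: (@sum_ge_term R A (fun m => \sum_a mu m a) m (fun m => sumr_ge0 _ (fun a _ => mu0 m a))).
set cG := fun w => \sum_m \sum_a mu m a * Dc u sigma m a w.
have Gdef : forall p, \sum_m \sum_a mu m a * lin (Dc u sigma m a) p = lin cG p.
  by move=> p; rewrite lin_sum2.
set c := hfun u sigma q0 / S.
have c0 : 0 < c by apply: divr_gt0.
have keyG : forall q, Q q -> c <= lin cG q.
  move=> q Qq; rewrite -Gdef.
  have -> : \sum_m \sum_a mu m a * lin (Dc u sigma m a) q =
      (\sum_m \sum_a lam m a * lin (Dc u sigma m a) q) / S.
    rewrite mulr_suml; apply: eq_bigr => m _; rewrite mulr_suml.
    by apply: eq_bigr => a _; rewrite /mu; ring.
  rewrite /c ler_pM2r ?invr_gt0 //; exact: key.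
pose eps (n : nat) : R := n.+1%:R^-1.
have eps0 : forall n, 0 < eps n by move=> n; rewrite /eps invr_gt0 ltr0n.
have eps1 : forall n, eps n <= 1 by move=> n; rewrite /eps invf_le1 ?ltr0n // ler1n.
pose tau n m a := ob m a + eps n * (mu m a - (if m == a then \sum_b mu m b else 0)).
have tau_sum : forall n m, \sum_a tau n m a = 1.
  move=> n m; rewrite big_split /= (@ob_strategy R A m).2 -mulr_sumr sumrB.
  by rewrite (sum_if m (fun=> \sum_b mu m b)) subrr mulr0 addr0.
have tau_str : forall n, is_strategy (tau n).
  move=> n m; split; last exact: tau_sum.
  move=> a; rewrite /tau /ob /obedient; case: eqP => [<-|_].
    have h := ler_wpM2l (ltW (eps0 n)) (rowle m).
    have h' := mulr_ge0 (ltW (eps0 n)) (mu0 m m).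
    have h'' := eps1 n.
    move: h h' h''; rewrite mulrBr mulr1; set x := eps n * _; set y := eps n * _.
    move=> h h' h''; lra.
  rewrite add0r subr0; apply: mulr_ge0; [exact: ltW | exact: mu0].
have tau_val : forall n p, ur_p u p sigma (tau n) = lin cL p + eps n * lin cG p.
  move=> n p; rewrite (ur_p_decomp _ _ _ (tau_sum n)) Lur -Gdef mulr_sumr; congr (_ + _).
  apply: eq_bigr => m _; rewrite mulr_sumr; apply: eq_bigr => a _.
  rewrite /tau /ob /obedient; case: eqP => [<-|_]; first by rewrite Dc_diag !mulr0.
  rewrite subr0; ring.
set M := \sum_w `|cG w|.
have M0 : 0 <= M by apply: sumr_ge0 => w _.
have : forall n, exists p, P p /\ lin cL p + eps n * lin cG p < V + eps n ^+ 2.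
  move=> n; have hur := HBR _ (tau_str n); rewrite HV in hur.
  have [_ [p Pp <-] Hp] := inf_adherent (exprn_gt0 2 (eps0 n))
     (ur_has_inf u sigma (tau n) HPne HPsub).
  exists p; split => //; rewrite -tau_val; apply: lt_le_trans Hp _.
  by rewrite lerD2r; exact: hur.
case/choice => ps Hps.
have Gbnd : forall n, lin cG (ps n) <= eps n.
  move=> n; have h1 := (Hps n).2; have h2 := LgeV _ (Hps n).1.
  have h3 : eps n * lin cG (ps n) < eps n * eps n.
    move: h1 h2; rewrite expr2; set x := eps n * _; set y := eps n * _; move=> h1 h2; lra.
  by rewrite ltr_pM2l in h3; [exact: ltW | exact: eps0].
have Lbnd : forall n, lin cL (ps n) <= V + (1 + M) / n.+1%:R.
  move=> n; have h1 := (Hps n).2.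
  have /ler_normlP [hG1 hG2] := lin_norm cG (HPsub _ (Hps n).1).
  have h2 : eps n * (- lin cG (ps n)) <= eps n * M.
    by apply: ler_wpM2l; [exact: ltW | exact: hG1].
  have h3 : eps n * eps n <= eps n * 1 by apply: ler_wpM2l; [exact: ltW | exact: eps1].
  have -> : (1 + M) / n.+1%:R = eps n * 1 + eps n * M by rewrite /eps; ring.
  move: h1 h2 h3; rewrite expr2 mulrN; set x := eps n * lin cG _; set y := eps n * M.
  set z := eps n * eps n; set w := eps n * 1; move=> h1 h2 h3; lra.
have psb : forall n w, 0 <= ps n w <= 1 by move=> n w; exact: dist_bnd (HPsub _ (Hps n).1) w.
have [phi [Hphi [pst Hc]]] := bw_fin psb.
have Ppst : P pst := HPcl (fun n => ps (phi n)) pst (fun n => (Hps _).1) Hc.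
have epsphi : forall n, eps (phi n) <= eps n.
  move=> n; rewrite /eps lef_pV2 ?posrE ?ltr0n // ler_nat ltnS.
  exact: incr_ge Hphi n.
have Lpst : lin cL pst <= V.
  apply: (@lim_le R Omega (lin cL) (fun n => ps (phi n)) pst (\sum_w `|cL w|) (1 + M) V CL0 _ Hc).
  - lra.
  - move=> n e e0 H; apply: ler_distlCDr; exact: lin_lip.
  - move=> n; apply: le_trans (Lbnd (phi n)) _; rewrite lerD2l.
    apply: ler_wpM2l; first lra.
    exact: epsphi.
have Gpst : lin cG pst <= 0.
  apply: (@lim_le R Omega (lin cG) (fun n => ps (phi n)) pst M 1 0 M0 ler01 Hc).
  - move=> n e e0 H; apply: ler_distlCDr; exact: lin_lip.
  - move=> n; rewrite add0r div1r; apply: le_trans (Gbnd (phi n)) _; exact: epsphi.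
have := keyG pst (conj Ppst Lpst); lra.
Qed.
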